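(* Let $\Lambda$ be an ordinal with $2\leq\Lambda\leq\omega$. Then there is a family $\langle a(n,v,i): n\in\omega,\ v\in{}^{2n}\omega,\ i\in\Lambda\cap(n+1)\rangle$ such that (a1) $a(n,v,i)\in{}^{n}\omega$ for all $n\in\omega$, $v\in{}^{2n}\omega$, $i\in\Lambda\cap(n+1)$; (a2) for all $n\in\omega$, $v\in{}^{2n}\omega$ and $m\in\omega$, $$\Big(\big(\prod_{i\in\Lambda\cap(n+1)}\widetilde{\mathbf{S}}^{m}_{a(n,v,i)}\big)\setminus\big(\prod_{i\in\Lambda\cap(n+1)}\widetilde{\mathbf{S}}^{m+1}_{a(n,v,i)}\big)\Big)\cdot{}^{\Lambda\cap\{n+1\}}({}^{\omega}\omega)$$ is the union of the pairwise disjoint sets $\prod_{i\in\Lambda\cap(n+2)}\mathbf{S}_{a(n+1,v^\frown\langle m,l\rangle,i)}$, $l\in\omega$.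
   Context: Ordinals are von Neumann ordinals: $n=\{0,\dots,n-1\}$, $\omega=\{0,1,2,\dots\}$. ${}^{B}A$ is the set of all functions from $B$ to $A$ (so ${}^{\varnothing}A=\{\varnothing\}$); ${}^{n}\omega$ is the set of sequences of natural numbers of length $n$; $v^\frown\langle m,l\rangle$ is the sequence $v$ extended by the two terms $m,l$. For $x\in{}^{<\omega}\omega$, $\mathbf{S}_x=\{p\in{}^{\omega}\omega: x\subseteq p\}$ (infinite sequences extending $x$), and for $m\in\omega$, $\widetilde{\mathbf{S}}^{m}_{x}=\bigcup\{\mathbf{S}_{x^\frown\langle l\rangle}: l\in\omega\setminus m\}$. For an index set $I$, $\prod_{i\in I}D_i$ is the set of functions $p$ with domain $I$ and $p(i)\in D_i$ for all $i\in I$. For sets of functions $E\subseteq{}^{A}C$, $F\subseteq{}^{B}C$ with $A\cap B=\varnothing$, $E\cdot F=\{e\cup f: e\in E,\ f\in F\}$, i.e. the set of $p\in{}^{A\cup B}C$ with $p\restriction A\in E$ and $p\restriction B\in F$. *)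

(* Defs.v *)
From mathcomp Require Import all_boot.
Set Implicit Arguments. Unset Strict Implicit. Unset Printing Implicit Defensive.

(* Ordinals Lambda with Lambda <= omega are encoded as [option nat]:
   [Some k] is the finite ordinal k, [None] is omega. *)
Definition inOrd (L : option nat) (i : nat) : bool :=
  if L is Some k then i < k else true.

Definition capOrd (L : option nat) (n : nat) (i : nat) : bool :=
  inOrd L i && (i < n).

Definition capSing (L : option nat) (n : nat) (i : nat) : bool :=
  inOrd L i && (i == n).

(* Infinite sequences in ^omega omega are functions nat -> nat;
   finite sequences in ^{<omega} omega are [seq nat]. *)
Definition Sx (x : seq nat) (p : nat -> nat) : Prop :=
  forall j, j < size x -> p j = nth 0 x j.

Definition Stilde (m : nat) (x : seq nat) (p : nat -> nat) : Prop :=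
  exists l, m <= l /\ Sx (rcons x l) p.

(* Elements of a product indexed by I ⊆ nat are represented by total
   functions P : nat -> (nat -> nat); membership only looks at indices in I. *)
Definition prodD (I : nat -> bool) (D : nat -> (nat -> nat) -> Prop)
  (P : nat -> nat -> nat) : Prop :=
  forall i, I i -> D i (P i).

Definition allFun (I : nat -> bool) (P : nat -> nat -> nat) : Prop := True.

(* E · F for sets E, F of functions on disjoint domains A, B:
   p|A in E and p|B in F. *)
Definition dotp (E F : (nat -> nat -> nat) -> Prop) (P : nat -> nat -> nat) : Prop :=
  E P /\ F P.

Definition setDiff (E F : (nat -> nat -> nat) -> Prop) (P : nat -> nat -> nat) : Prop :=
  E P /\ ~ F P.

(* Main.v *)
Require Import Defs.
From HB Require Import structures.
From mathcomp Require Import all_boot.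
From mathcomp Require Import classical_sets boolp cardinality functions.

HB.instance Definition _ := isPointed.Build (seq nat) [::].

Section Enum.
Local Open Scope classical_set_scope.
Lemma enum_inf (Z : (seq nat * seq nat)%type -> Prop) (g : nat -> (seq nat * seq nat)%type) :
  (forall k, Z (g k)) -> injective g ->
  exists f : nat -> (seq nat * seq nat)%type,
    (forall k, Z (f k)) /\ injective f /\ (forall z, Z z -> exists k, f k = z).
Proof.
move=> Zg ig.
have inf : infinite_set Z.
  apply/infiniteP; apply/pcard_leP; apply/injfunPex; exists g.
    by move=> k _; apply: Zg.
  by move=> x y _ _; apply: ig.
have /card_esym/card_set_bijP[f [ff fi fs]] := eq_card_nat (countableP Z) inf.
exists f; split; first by move=> k; apply: ff.
split; first by move=> x y; apply: fi; rewrite inE.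
by move=> z /fs [k _ <-]; exists k.
Qed.
End Enum.

Definition dd (L : option nat) n := if L is Some k then minn k n.+1 else n.+1.
Definition ss (L : option nat) n := if inOrd L n.+1 then n.+1 else 0.
Definition ZZ (L : option nat) n (z : (seq nat * seq nat)%type) : Prop :=
  size z.1 = dd L n /\ 0 \in z.1 /\ size z.2 = ss L n.

Lemma capOrdE L n i : capOrd L n.+1 i = (i < dd L n).
Proof. by case: L => [k|] //=; rewrite /capOrd /= ltn_min. Qed.

Lemma capOrd_le L n i : i <= n -> capOrd L n.+2 i = capOrd L n.+1 i.
Proof. by move=> hi; rewrite /capOrd !ltnS hi (leqW hi). Qed.

Lemma capOrd_top L n : capOrd L n.+2 n.+1 = inOrd L n.+1.
Proof. by rewrite /capOrd ltnSn andbT. Qed.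

Lemma Sx_rcons x c p : Sx (rcons x c) p <-> Sx x p /\ p (size x) = c.
Proof.
rewrite /Sx size_rcons; split.
  move=> H; split; last by rewrite H // nth_rcons ltnn eqxx.
  by move=> j hj; rewrite H ?nth_rcons ?hj // ltnS ltnW.
move=> [H1 H2] j; rewrite ltnS leq_eqVlt => /orP[/eqP ->|hj].
  by rewrite nth_rcons ltnn eqxx.
by rewrite nth_rcons hj H1.
Qed.

Lemma Stilde_E m x p : Stilde m x p <-> Sx x p /\ m <= p (size x).
Proof.
split.
  by move=> [l [hl /Sx_rcons [h1 h2]]]; split => //; rewrite h2.
by move=> [h1 h2]; exists (p (size x)); split => //; apply/Sx_rcons.
Qed.

Fixpoint aa (f : nat -> nat -> (seq nat * seq nat)%type) n v i : seq nat :=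
  match n with
  | 0 => [::]
  | n'.+1 =>
      let z := f n' (nth 0 v (2 * n').+1) in
      if i <= n' then rcons (aa f n' (take (2 * n') v) i) (nth 0 v (2 * n') + nth 0 z.1 i)
      else z.2
  end.

Lemma aa_size L f : (forall n k, ZZ L n (f n k)) ->
  forall n v i, size v = 2 * n -> capOrd L n.+1 i -> size (aa f n v i) = n.
Proof.
move=> fZ; elim=> [|n IH] v i hv hi //=.
case: ifP => hin.
  rewrite size_rcons IH //; last by rewrite -capOrd_le.
  by rewrite size_takel // hv leq_mul2l leqnSn orbT.
have ei : i = n.+1.
  by move: hi; rewrite /capOrd ltnS => /andP[_]; rewrite leq_eqVlt ltnS hin orbF => /eqP.
case: (fZ n (nth 0 v (2 * n).+1)) => _ [_ ->]; rewrite /ss.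
by move: hi; rewrite ei capOrd_top => ->.
Qed.

Lemma aa_step f n v m l i : size v = 2 * n ->
  aa f n.+1 (v ++ [:: m; l]) i =
  if i <= n then rcons (aa f n v i) (m + nth 0 (f n l).1 i) else (f n l).2.
Proof.
move=> hv /=.
have e1 : nth 0 (v ++ [:: m; l]) (2 * n).+1 = l by rewrite nth_cat hv ltnNge leqnSn /= subSn // subnn.
have e2 : nth 0 (v ++ [:: m; l]) (2 * n) = m by rewrite nth_cat hv ltnn subnn.
by rewrite e1 e2 -hv take_size_cat.
Qed.

Theorem lemma11 (L : option nat) (hL : forall k, L = Some k -> 2 <= k) :
  exists a : nat -> seq nat -> nat -> seq nat,
    (* (a1) *)
    (forall n v i, size v = 2 * n -> capOrd L n.+1 i -> size (a n v i) = n) /\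
    (* (a2) *)
    (forall n v m, size v = 2 * n ->
       (forall P : nat -> nat -> nat,
          dotp (setDiff (prodD (capOrd L n.+1) (fun i => Stilde m (a n v i)))
                        (prodD (capOrd L n.+1) (fun i => Stilde m.+1 (a n v i))))
               (allFun (capSing L n.+1)) P
          <-> exists l, prodD (capOrd L n.+2)
                          (fun i => Sx (a n.+1 (v ++ [:: m; l]) i)) P) /\
       (forall l l' (P : nat -> nat -> nat), l <> l' ->
          prodD (capOrd L n.+2) (fun i => Sx (a n.+1 (v ++ [:: m; l]) i)) P ->
          ~ prodD (capOrd L n.+2) (fun i => Sx (a n.+1 (v ++ [:: m; l']) i)) P)).
Proof.
have hd : forall n, 0 < dd L n.
  move=> n; case E: L => [k|] //=; rewrite leq_min /=; have := hL k E.
  by case: k {E} => [|k].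
have ex : forall n, exists f : nat -> (seq nat * seq nat)%type,
    (forall k, ZZ L n (f k)) /\ injective f /\ (forall z, ZZ L n z -> exists k, f k = z).
  move=> n.
  case hin: (inOrd L n.+1).
    apply: (@enum_inf (ZZ L n) (fun k => (nseq (dd L n) 0, k :: nseq n 0))).
      move=> k; rewrite /ZZ /= !size_nseq /ss hin; split => //; split => //.
      by rewrite mem_nseq hd.
    by move=> x y [].
  have hd2 : dd L n = (dd L n - 2).+2.
    case E: L hin => [k|] //= hk; have h2 := hL k E.
    have hk' : k <= n.+1 by rewrite leqNgt hk.
    by rewrite (minn_idPl hk') -addn2 subnK.
  apply: (@enum_inf (ZZ L n) (fun k => (0 :: k :: nseq (dd L n - 2) 0, [::]))).
    move=> k; rewrite /ZZ /= !size_nseq /ss hin; split => //; split => //.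
  by move=> x y [].
have [f hf] := choice ex.
have fZ : forall n k, ZZ L n (f n k) by move=> n k; case: (hf n) => h _; apply: h.
have finj : forall n, injective (f n) by move=> n; case: (hf n) => _ [].
have fsurj : forall n z, ZZ L n z -> exists k, f n k = z by move=> n; case: (hf n) => _ [].
have a1 := @aa_size L f fZ.
exists (aa f); split; first exact: a1.
move=> n v m hv; split.
  move=> P; split.
    move=> [[H1 H2] _].
    have H1' : forall i, capOrd L n.+1 i -> Sx (aa f n v i) (P i) /\ m <= P i n.
      by move=> i hi; have /Stilde_E := H1 i hi; rewrite a1.
    pose z := ([seq P i n - m | i <- iota 0 (dd L n)],
               if inOrd L n.+1 then mkseq (P n.+1) n.+1 else [::]).
    have Zz : ZZ L n z.
      rewrite /ZZ /= size_map size_iota; split => //; split; last first.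
        by rewrite /ss; case: ifP => // _; rewrite size_mkseq.
      apply/mapP; apply: contra_notP H2 => Hn i hi.
      apply/Stilde_E; have [h1 h2] := H1' i hi; rewrite a1 //; split => //.
      rewrite ltn_neqAle h2 andbT; apply/negP => /eqP e; apply: Hn; exists i.
        by rewrite mem_iota /= -capOrdE.
      by rewrite e subnn.
    have [l hl] := fsurj n z Zz; exists l => i hi.
    rewrite aa_step // hl /z /=.
    case: ifP => hin.
      have hi' : capOrd L n.+1 i by rewrite -capOrd_le.
      have [h1 h2] := H1' i hi'.
      apply/Sx_rcons; split => //; rewrite a1 //.
      have hid : i < dd L n by rewrite -capOrdE.
      by rewrite (nth_map 0) ?size_iota // nth_iota // add0n subnKC.
    have ei : i = n.+1.
      by move: hi; rewrite /capOrd ltnS => /andP[_]; rewrite leq_eqVlt ltnS hin orbF => /eqP.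
    move: hi; rewrite ei capOrd_top => -> j hj /=.
    by rewrite size_mkseq in hj; rewrite nth_mkseq.
  move=> [l H]; split => //.
  have Zz := fZ n l; case: Zz => [s1 [z0 s2]].
  have H' : forall i, capOrd L n.+1 i -> Sx (aa f n v i) (P i) /\ P i n = m + nth 0 (f n l).1 i.
    move=> i hi; have hin : i <= n by move: hi; rewrite /capOrd ltnS => /andP[].
    have := H i; rewrite capOrd_le // aa_step // hin => /(_ hi) /Sx_rcons.
    by rewrite a1.
  split.
    move=> i hi; apply/Stilde_E; have [h1 h2] := H' i hi; rewrite a1 // h2 leq_addr.
    by split.
  move=> Hall.
  set i := index 0 (f n l).1.
  have hi : capOrd L n.+1 i by rewrite capOrdE -s1 index_mem.
  have := Hall i hi; move/Stilde_E => [_]; rewrite a1 //.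
  have [_ ->] := H' i hi; rewrite nth_index // addn0 ltnn //.
move=> l l' P nll' H H'; apply: nll'; apply: (finj n).
have [s1 [_ s2]] := fZ n l; have [s1' [_ s2']] := fZ n l'.
have e1 : (f n l).1 = (f n l').1.
  apply: (@eq_from_nth _ 0); first by rewrite s1 s1'.
  move=> i; rewrite s1 -capOrdE => hi.
  have hin : i <= n by move: hi; rewrite /capOrd ltnS => /andP[].
  have := H i; have := H' i; rewrite capOrd_le // !aa_step // hin.
  move=> /(_ hi) /Sx_rcons [_ e] /(_ hi) /Sx_rcons [_ e'].
  by apply/eqP; rewrite -(eqn_add2l m) -e -e'.
have e2 : (f n l).2 = (f n l').2.
  case hin: (inOrd L n.+1); last first.
    by move: s2 s2'; rewrite /ss hin => /eqP; rewrite size_eq0 => /eqP -> /eqP; rewrite size_eq0 => /eqP ->.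
  apply: (@eq_from_nth _ 0); first by rewrite s2 s2'.
  move=> j; rewrite s2 /ss hin => hj.
  have hc : capOrd L n.+2 n.+1 by rewrite capOrd_top.
  have := H n.+1 hc; have := H' n.+1 hc; rewrite !aa_step // ltnn.
  move=> h' h; rewrite -h; last by rewrite s2 /ss hin.
  by rewrite -h' // s2' /ss hin.
by rewrite [f n l]surjective_pairing [f n l']surjective_pairing e1 e2.
Qed.
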